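(* Let $\tau\in(0,1)$, $C>\tau$, $\mu>0$, let $a:\mathbb{R}^+\to\mathbb{R}^+$ be continuous and bounded, $h(x)=\frac{x}{1+x}$, and $$d_1(t)=\mu\frac{t+C}{1-\tau},\qquad \beta(t)=\frac{t+C+1-\tau}{t+C}\Big(d_1(t)-\frac{1}{t+C}\Big).$$ Then the system $$x_1'(t)=-(a(t)+d_1(t))x_1(t)+a(t)x_2(t)+\beta(t)h(x_1(t-\tau)),\quad x_2'(t)=-(a(t)+d_1(t))x_2(t)+a(t)x_1(t)+\beta(t)h(x_2(t-\tau))$$ has the solution $x(t)=\big(\frac{1}{t+C},\frac{1}{t+C}\big)$, hence is not permanent, although $\beta(t)-d_1(t)\ge\mu/2$ for all sufficiently large $t$ (and $\beta$ is unbounded).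
   Context: Solutions are considered for $t\ge0$ with initial data on $[-\tau,0]$. *)

(* Defs.v *)
From Stdlib Require Import Reals Lra.
From Coquelicot Require Import Coquelicot.
Open Scope R_scope.

Definition hf (x : R) : R := x / (1 + x).

Definition d1f (mu tau C t : R) : R := mu * (t + C) / (1 - tau).

Definition betaf (mu tau C t : R) : R :=
  (t + C + 1 - tau) / (t + C) * (d1f mu tau C t - 1 / (t + C)).

Definition cont_within (D : R -> Prop) (f : R -> R) (t : R) : Prop :=
  filterlim f (within D (locally t)) (locally (f t)).

Definition is_solution (tau mu C : R) (a x1 x2 : R -> R) : Prop :=
  (forall t, -tau <= t <= 0 ->
     cont_within (fun s => -tau <= s <= 0) x1 t /\
     cont_within (fun s => -tau <= s <= 0) x2 t) /\
  cont_within (fun s => 0 <= s) x1 0 /\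
  cont_within (fun s => 0 <= s) x2 0 /\
  (forall t, 0 < t ->
     is_derive x1 t
       (- (a t + d1f mu tau C t) * x1 t + a t * x2 t
        + betaf mu tau C t * hf (x1 (t - tau))) /\
     is_derive x2 t
       (- (a t + d1f mu tau C t) * x2 t + a t * x1 t
        + betaf mu tau C t * hf (x2 (t - tau)))).

Definition admissible_solution (tau mu C : R) (a x1 x2 : R -> R) : Prop :=
  is_solution tau mu C a x1 x2 /\
  (forall s, -tau <= s <= 0 -> 0 <= x1 s /\ 0 <= x2 s) /\
  0 < x1 0 /\ 0 < x2 0.

Definition permanent (tau mu C : R) (a : R -> R) : Prop :=
  exists m M, 0 < m /\ m <= M /\
    forall x1 x2, admissible_solution tau mu C a x1 x2 ->
      exists T, forall t, T <= t ->
        m <= x1 t <= M /\ m <= x2 t <= M.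

(* Main.v *)
Require Import Defs.
From Stdlib Require Import Reals Lra.
From Coquelicot Require Import Coquelicot.
Open Scope R_scope.

Lemma inv_cont (D : R -> Prop) (c t : R) : 0 < t + c ->
  cont_within D (fun t => 1 / (t + c)) t.
Proof.
  intros H. unfold cont_within.
  eapply filterlim_filter_le_1. apply filter_le_within.
  apply (ex_derive_continuous (K:=R_AbsRing) (V:=R_NormedModule) (fun t => 1 / (t + c))). auto_derive. lra.
Qed.

Theorem mainTheorem11 (tau C mu : R) (a : R -> R)
  (Htau : 0 < tau < 1) (HC : tau < C) (Hmu : 0 < mu)
  (Ha_pos : forall t, 0 <= t -> 0 <= a t)
  (Ha_cont : forall t, 0 <= t -> cont_within (fun s => 0 <= s) a t)
  (Ha_bdd : exists K, forall t, 0 <= t -> a t <= K) :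
  admissible_solution tau mu C a (fun t => 1 / (t + C)) (fun t => 1 / (t + C)) /\
  ~ permanent tau mu C a /\
  (exists T, forall t, T <= t -> mu / 2 <= betaf mu tau C t - d1f mu tau C t) /\
  (forall K, exists t, 0 <= t /\ K < betaf mu tau C t).
Proof.
  assert (Hbd : forall t, 0 < t + C ->
    betaf mu tau C t - d1f mu tau C t = mu - (t + C + 1 - tau) / ((t + C) * (t + C))).
  { intros t Ht. unfold betaf, d1f. field. lra. }
  assert (Hpart3 : forall t, 4 / mu + 1 <= t ->
     mu / 2 <= betaf mu tau C t - d1f mu tau C t).
  { intros t Ht. assert (H4 : 0 < 4 / mu) by (apply Rdiv_lt_0_compat; lra).
    rewrite Hbd by lra. set (u := t + C).
    assert (Hu1 : 1 <= u) by (unfold u; lra).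
    assert (Hu2 : 4 / mu <= u) by (unfold u; lra).
    assert (Hmu4 : 4 <= mu * u).
    { apply Rmult_le_compat_l with (r := mu) in Hu2; [|lra].
      replace (mu * (4 / mu)) with 4 in Hu2 by (field; lra). lra. }
    assert ((u + 1 - tau) / (u * u) <= mu / 2).
    { apply Rmult_le_reg_r with (r := u * u). nra.
      replace ((u + 1 - tau) / (u * u) * (u * u)) with (u + 1 - tau) by (field; lra).
      nra. }
    lra. }
  assert (Hadm : admissible_solution tau mu C a (fun t => 1 / (t + C)) (fun t => 1 / (t + C))).
  { split; [split; [|split; [|split]]|].
    + intros t Ht. split; apply inv_cont; lra.
    + apply inv_cont; lra.
    + apply inv_cont; lra.
    + intros t Ht.
      assert (E : - (a t + d1f mu tau C t) * (1 / (t + C)) + a t * (1 / (t + C)) +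
          betaf mu tau C t * hf (1 / (t - tau + C)) = - (1 / ((t + C) * (t+C)))).
      { unfold hf, betaf, d1f. field. repeat split; lra. }
      split; (replace (t - tau + C) with (t - tau + C) by reflexivity);
        [| ]; rewrite E; auto_derive; try lra; field; lra.
    + split; [intros s Hs; split; left; apply Rdiv_lt_0_compat; lra|].
      split; apply Rdiv_lt_0_compat; lra. }
  split; [|split; [|split]].
  - exact Hadm.
  - intros [m [M [Hm [HmM Hp]]]].
    destruct (Hp _ _ Hadm) as [T HT].
    set (t := Rmax T 0 + 1 / m).
    assert (Hm' : 0 < 1 / m) by (apply Rdiv_lt_0_compat; lra).
    assert (HT1 : T <= t) by (unfold t; generalize (Rmax_l T 0); lra).
    destruct (HT t HT1) as [[H1 _] _].
    assert (Ht0 : 1 / m < t + C) by (unfold t; generalize (Rmax_r T 0); lra).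
    apply Rmult_le_compat_r with (r := t + C) in H1; [|lra].
    replace (1 / (t + C) * (t + C)) with 1 in H1 by (field; lra).
    apply Rmult_lt_compat_l with (r := m) in Ht0; [|lra].
    replace (m * (1 / m)) with 1 in Ht0 by (field; lra). lra.
  - exists (4 / mu + 1). exact Hpart3.
  - intros K. set (t := Rmax (4 / mu + 1) (Rabs K / mu + 1)).
    assert (H4 : 0 <= 4 / mu) by (left; apply Rdiv_lt_0_compat; lra).
    assert (H5 : 0 <= Rabs K / mu) by (apply Rdiv_le_0_compat; [apply Rabs_pos|lra]).
    assert (Ht1 : 4 / mu + 1 <= t) by apply Rmax_l.
    assert (Ht2 : Rabs K / mu + 1 <= t) by apply Rmax_r.
    exists t. split. lra.
    generalize (Hpart3 t Ht1). intros Hb.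
    assert (Hd : mu * (t + C) <= d1f mu tau C t).
    { unfold d1f. apply Rmult_le_reg_r with (r := 1 - tau). lra.
      replace (mu * (t + C) / (1 - tau) * (1 - tau)) with (mu * (t + C)) by (field; lra).
      assert (0 < mu * (t + C)) by (apply Rmult_lt_0_compat; lra). nra. }
    assert (HK : Rabs K < mu * t).
    { apply Rmult_le_compat_l with (r := mu) in Ht2; [|lra].
      replace (mu * (Rabs K / mu + 1)) with (Rabs K + mu) in Ht2 by (field; lra). lra. }
    generalize (Rle_abs K). nra.
Qed.
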